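(* For all integers $d\ge1$ and $p\ge0$, $$\|\partial_{x_i}v\|_{L^2(Q_d)}\le C_{p,1}\|v\|_{L^2(Q_d)}\qquad\forall v\in\mathbb{P}_p(Q_d),\ \forall i\in\{1,\dots,d\},$$ where $Q_d:=[0,1]^d$ is the unit hypercube and $\mathbb{P}_p(Q_d)$ the polynomials of total degree at most $p$.
   Context: $C_{p,1}$ denotes the best constant in the univariate inverse inequality $\|v'\|_{L^2(0,1)}\le C_{p,1}\|v\|_{L^2(0,1)}$ for all polynomials $v$ of degree at most $p$ on $(0,1)$. *)

(* Defs.v *)
From HB Require Import structures.
From mathcomp Require Import all_boot all_order all_algebra.
From mathcomp Require Import all_classical all_reals all_analysis.
Set Implicit Arguments. Unset Strict Implicit. Unset Printing Implicit Defensive.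
Import Order.TTheory GRing.Theory Num.Theory.
Import numFieldNormedType.Exports.
Local Open Scope classical_set_scope.
Local Open Scope ring_scope.

Section Defs.
Variable R : realType.

Definition int01 (f : R -> R) : R :=
  (\int[@lebesgue_measure R]_(t in `[0%R, 1%R]) f t)%R.

Definition L2poly (v : {poly R}) : R := Num.sqrt (int01 (fun t => v.[t] ^+ 2)).

Definition Cp1 (p : nat) : R :=
  inf [set C : R | 0 <= C /\
        forall v : {poly R}, (size v <= p.+1)%N -> L2poly v^`() <= C * L2poly v].

Definition setc (d : nat) (x : 'rV[R]_d) (k : nat) (t : R) : 'rV[R]_d :=
  \row_(j < d) (if (j : nat) == k then t else x ord0 j).

(** Iterated integral over coordinates 0..k-1, each over [0,1]
    (for k = d this is the integral over the unit cube Q_d = [0,1]^d). *)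
Fixpoint iint (d : nat) (k : nat) (f : 'rV[R]_d -> R) (x : 'rV[R]_d) : R :=
  match k with
  | 0 => f x
  | k'.+1 => int01 (fun t => iint k' f (setc x k' t))
  end.

Definition L2cube (d : nat) (f : 'rV[R]_d -> R) : R :=
  Num.sqrt (iint d (fun x => f x ^+ 2) 0).

Definition is_poly_tdeg (d p : nat) (v : 'rV[R]_d -> R) : Prop :=
  exists c : {ffun 'I_d -> 'I_p.+1} -> R,
    forall x : 'rV[R]_d,
      v x = \sum_(a : {ffun 'I_d -> 'I_p.+1} | (\sum_(i < d) (a i : nat) <= p)%N)
              c a * \prod_(i < d) x ord0 i ^+ a i.

Definition partial (d : nat) (i : 'I_d) (v : 'rV[R]_d -> R) : 'rV[R]_d -> R :=
  fun x => derive1 (fun t => v (setc x i t)) (x ord0 i).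

End Defs.

(* Main.v *)
Require Import Defs.
From HB Require Import structures.
From mathcomp Require Import all_boot all_order all_algebra.
From mathcomp Require Import all_classical all_reals all_analysis.
From mathcomp Require Import ring lra zify.
Import Order.TTheory GRing.Theory Num.Theory.
Local Open Scope ring_scope.

Section Uni.
Set Implicit Arguments. Unset Strict Implicit. Unset Printing Implicit Defensive.
Import numFieldNormedType.Exports.
Local Open Scope classical_set_scope.
Local Open Scope ring_scope.
Variable R : realType.
Notation mu := (@lebesgue_measure R).

Definition prim (q : {poly R}) : {poly R} :=
  (\poly_(k < size q) (q`_k / k.+1%:R)) * 'X.

Lemma prim_deriv q : (prim q)^`() = q.
Proof.
apply/polyP => i; rewrite coef_deriv /prim coefMX /= coef_poly.
case: ltnP => hi.
  rewrite -mulr_natr; field; rewrite nat1r; exact/lt0r_neq0/ltr0Sn.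
by rewrite mul0rn (nth_default 0 hi).
Qed.

Lemma FTC_poly (q : {poly R}) a b : a < b ->
  (\int[mu]_(x in `[a, b]) q.[x])%R = (prim q).[b] - (prim q).[a].
Proof.
move=> ab; rewrite /Rintegral.
rewrite (@continuous_FTC2 _ (horner q) (horner (prim q))) //=.
- apply/continuous_subspaceT => x; exact: continuous_horner.
- split=> [x _| |].
  + exact: derivable_horner.
  + by apply: cvg_at_right_filter; exact: continuous_horner.
  + by apply: cvg_at_left_filter; exact: continuous_horner.
- by move=> x _; rewrite -derivE prim_deriv.
Qed.

Definition pintN (N : nat) (q : {poly R}) : R := \sum_(k < N) q`_k / k.+1%:R.

Lemma int01_poly N (q : {poly R}) : (size q <= N)%N ->
  int01 (fun t => q.[t]) = pintN N q.
Proof.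
move=> hN; rewrite /int01 FTC_poly ?ltr01 // /prim !hornerMX mulr0 subr0 mulr1.
rewrite horner_poly /pintN.
rewrite (big_ord_widen N (fun k => q`_k / k.+1%:R * 1 ^+ k)) //.
rewrite [RHS](bigID (fun k : 'I_N => (k < size q)%N)) /=.
rewrite [X in _ = _ + X]big1 ?addr0; last first.
  by move=> k; rewrite -leqNgt => hk; rewrite (nth_default 0 hk) mul0r.
by apply: eq_bigr => k _; rewrite expr1n mulr1.
Qed.

Lemma pintN_lin N a (p q : {poly R}) :
  pintN N (a *: p + q) = a * pintN N p + pintN N q.
Proof.
rewrite /pintN mulr_sumr -big_split /=; apply: eq_bigr => k _.
by rewrite coefD coefZ mulrDl mulrA.
Qed.

Lemma int01_ge0 (f : R -> R) : (forall t, 0 <= t <= 1 -> 0 <= f t) -> 0 <= int01 f.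
Proof.
move=> h; apply: Rintegral_ge0 => x /=; rewrite in_itv /=; exact: h.
Qed.

Lemma poly_sq_int0 (q : {poly R}) : int01 (fun t => (q ^+ 2).[t]) = 0 -> q = 0.
Proof.
move=> h0; set P := prim (q ^+ 2).
have h01 : P.[1] - P.[0] = 0 by rewrite -FTC_poly ?ltr01.
have hx : forall x, 0 < x < 1 -> P.[x] = P.[0].
  move=> x /andP[x0 x1].
  have a1 : 0 <= P.[x] - P.[0].
    rewrite -FTC_poly //; apply: Rintegral_ge0 => t _; rewrite horner_exp; exact: sqr_ge0.
  have a2 : 0 <= P.[1] - P.[x].
    rewrite -FTC_poly //; apply: Rintegral_ge0 => t _; rewrite horner_exp; exact: sqr_ge0.
  lra.
set P' := P - (P.[0])%:P.
have P'0 : P' = 0.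
  apply/eqP; apply/negPn/negP => nz.
  have := max_poly_roots nz (rs := [seq (k.+2%:R)^-1 | k <- iota 0 (size P).+1]).
  rewrite size_map size_iota.
  have sP' : (size P' <= (size P).+1)%N.
    have := size_polyD P (- (P.[0])%:P); rewrite size_polyN.
    have := size_polyC_leq1 (P.[0]); rewrite /P' => a b; apply: leq_trans b _.
    by rewrite geq_max leqnSn /=; exact: leq_trans a _.
  move=> H; suff: ((size P).+1 < size P')%N by rewrite ltnNge sP'.
  apply: H; last first.
    rewrite map_inj_uniq ?iota_uniq // => m n /(congr1 (fun x : R => x^-1)).
    by rewrite !invrK => /eqP; rewrite eqr_nat => /eqP [].
  apply/allP => x /mapP [k _ ->]; rewrite /root /P' hornerD hornerN hornerC.
  rewrite hx ?subrr //; apply/andP; split; first by rewrite invr_gt0 ltr0Sn.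
  by rewrite invf_lt1 ?ltr0Sn // ltr1n.
have : P^`() = 0 by rewrite -[P](subrK (P.[0])%:P) -/P' P'0 add0r derivC.
rewrite /P prim_deriv => /eqP; rewrite expf_eq0 /= => /eqP //.
Qed.
End Uni.

Section B.
Set Implicit Arguments. Unset Strict Implicit. Unset Printing Implicit Defensive.
Import numFieldNormedType.Exports.
Local Open Scope classical_set_scope.
Local Open Scope ring_scope.
Variable R : realType.

Lemma pintN_sum N I (r : seq I) (P : pred I) (F : I -> {poly R}) :
  pintN N (\sum_(i <- r | P i) F i) = \sum_(i <- r | P i) pintN N (F i).
Proof.
rewrite /pintN exchange_big /=; apply: eq_bigr => k _.
by rewrite coef_sum mulr_suml.
Qed.

Lemma pintN_XnZ N m (c : R) : (m < N)%N -> pintN N (c *: 'X^m) = c / m.+1%:R.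
Proof.
move=> hm; rewrite /pintN (bigD1 (Ordinal hm)) //= big1 ?addr0.
  by rewrite coefZ coefXn eqxx mulr1.
move=> k /eqP hk; rewrite coefZ coefXn.
case: eqP => [e|]; last by rewrite mulr0 mul0r.
by exfalso; apply: hk; apply: val_inj.
Qed.

Definition hil (k l : nat) : R := (k + l).+1%:R^-1.

Lemma poly_expand n (q : {poly R}) : (size q <= n)%N ->
  q = \sum_(k < n) q`_k *: 'X^k.
Proof.
move=> hq; rewrite -poly_def; apply/polyP => i; rewrite coef_poly.
by case: ltnP => // hi; rewrite nth_default // (leq_trans hq hi).
Qed.

Lemma int01_mul n (q r : {poly R}) : (size q <= n)%N -> (size r <= n)%N ->
  int01 (fun t => (q * r).[t]) =
  \sum_(k < n) \sum_(l < n) q`_k * r`_l * hil k l.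
Proof.
move=> hq hr.
rewrite (int01_poly (N := (n + n)%N)); last first.
  apply: leq_trans (size_mul_leq _ _) _; apply: leq_trans (leq_pred _) _; exact: leq_add.
rewrite {1}(poly_expand hq) {1}(poly_expand hr) mulr_suml pintN_sum.
apply: eq_bigr => k _; rewrite mulr_sumr pintN_sum; apply: eq_bigr => l _.
rewrite -scalerAl -scalerAr -exprD scalerA pintN_XnZ //.
have := ltn_ord k; have := ltn_ord l; lia.
Qed.

Lemma size_lin3 (a b c : R) (p q r : {poly R}) :
  (size (a *: p + b *: q + c *: r)%R <= size p + size q + size r)%N.
Proof.
have h1 := size_polyD (a *: p + b *: q) (c *: r).
have h2 := size_polyD (a *: p) (b *: q).
have h3 := size_scale_leq a p; have h4 := size_scale_leq b q.
have h5 := size_scale_leq c r.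
apply: leq_trans h1 _; rewrite geq_max; apply/andP; split.
  apply: leq_trans h2 _; rewrite geq_max; apply/andP; split.
    by apply: leq_trans h3 _; lia.
  by apply: leq_trans h4 _; lia.
by apply: leq_trans h5 _; lia.
Qed.

Lemma int01_lin3 (a b c : R) (p q r : {poly R}) (F : R -> R) :
  (forall t, F t = a * p.[t] + b * q.[t] + c * r.[t]) ->
  int01 F = a * int01 (fun t => p.[t]) + b * int01 (fun t => q.[t])
            + c * int01 (fun t => r.[t]).
Proof.
move=> hF; set N := (size p + size q + size r)%N.
have -> : F = (fun t => (a *: p + b *: q + c *: r).[t]).
  by apply/funext => t; rewrite hF !hornerD !hornerZ.
rewrite !(int01_poly (N := N)) ?size_lin3 //; try (rewrite /N; lia).
rewrite /pintN !mulr_sumr -!big_split /=; apply: eq_bigr => k _.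
rewrite !coefD !coefZ; ring.
Qed.

Lemma int01_cst (c : R) : int01 (fun _ => c) = c.
Proof.
have -> : (fun _ => c) = (fun t => (c%:P).[t]) by apply/funext=> t; rewrite hornerC.
rewrite (int01_poly (N := 1)) ?size_polyC_leq1 // /pintN big_ord1 coefC /=.
by rewrite divr1.
Qed.

Lemma int01_le (p q : {poly R}) : (forall t, 0 <= t <= 1 -> p.[t] <= q.[t]) ->
  int01 (fun t => p.[t]) <= int01 (fun t => q.[t]).
Proof.
move=> h; rewrite -subr_ge0.
have -> : int01 (fun t => q.[t]) - int01 (fun t => p.[t]) =
   int01 (fun t => 1 * q.[t] + (-1) * p.[t] + 0 * (0 : {poly R}).[t]).
  by rewrite (@int01_lin3 1 (-1) 0 q p 0 (fun t => 1 * q.[t] + (-1) * p.[t] + 0 * (0 : {poly R}).[t])) //; ring.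
by apply: int01_ge0 => t /h; rewrite horner0; lra.
Qed.

Lemma int01_sq_ge0 (p : {poly R}) : 0 <= int01 (fun t => (p ^+ 2).[t]).
Proof. by apply: int01_ge0 => t _; rewrite horner_exp sqr_ge0. Qed.

Lemma int01_CS (f g : {poly R}) : 0 < int01 (fun t => (g ^+ 2).[t]) ->
  int01 (fun t => (f * g).[t]) ^+ 2 <=
  int01 (fun t => (f ^+ 2).[t]) * int01 (fun t => (g ^+ 2).[t]).
Proof.
set A := int01 (fun t => (f ^+ 2).[t]); set B := int01 (fun t => (f * g).[t]).
set C := int01 (fun t => (g ^+ 2).[t]) => C0.
have key : forall l, 0 <= A - 2 * l * B + l ^+ 2 * C.
  move=> l; have := int01_sq_ge0 (f - l *: g).
  rewrite (@int01_lin3 1 (- 2 * l) (l ^+ 2) (f ^+ 2) (f * g) (g ^+ 2)); first (rewrite -/A -/B -/C; lra).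
  by move=> t; rewrite !horner_exp hornerM hornerD hornerN hornerZ; ring.
have := key (B / C); set l := B / C => h.
have hl : l * C = B by rewrite /l divfK // gt_eqF.
have : 0 <= A * C - B ^+ 2.
  have : 0 <= (A - 2 * l * B + l ^+ 2 * C) * C by apply: mulr_ge0 => //; lra.
  have -> : (A - 2 * l * B + l ^+ 2 * C) * C = A * C - 2 * B * (l * C) + (l * C) ^+ 2 by ring.
  by rewrite hl; lra.
lra.
Qed.


Definition Hm n : 'M[R]_n := \matrix_(k, l) hil k l.
Definition polyrow n (u : 'rV[R]_n) : {poly R} := \sum_(k < n) u 0 k *: 'X^k.

Lemma size_polyrow n (u : 'rV[R]_n) : (size (polyrow u) <= n)%N.
Proof.
rewrite /polyrow; apply: (big_ind (fun p : {poly R} => (size p <= n)%N)).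
- by rewrite size_poly0.
- by move=> p q hp hq; apply: leq_trans (size_polyD _ _) _; rewrite geq_max hp hq.
- move=> k _; apply: leq_trans (size_scale_leq _ _) _; by rewrite size_polyXn.
Qed.

Lemma polyrow_coef n (u : 'rV[R]_n) (i : 'I_n) : (polyrow u)`_i = u 0 i.
Proof.
rewrite /polyrow coef_sum (bigD1 i) //= big1 ?addr0; first by rewrite coefZ coefXn eqxx mulr1.
move=> k hk; rewrite coefZ coefXn; case: eqP => [e|]; last by rewrite mulr0.
by exfalso; move/eqP: hk; apply; apply: val_inj.
Qed.

Lemma Hm_unit n : Hm n \in unitmx.
Proof.
rewrite -row_free_unit -kermx_eq0; apply/negPn/negP => /rowV0Pn [v /sub_kermxP vH v0].
have : polyrow v = 0.
  apply: poly_sq_int0; rewrite expr2 (int01_mul (n := n)) ?size_polyrow //.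
  rewrite exchange_big /=; apply: big1 => l _.
  have := congr1 (fun M : 'rV_n => M 0 l) vH; rewrite !mxE => e.
  transitivity (v 0 l * \sum_k v 0 k * Hm n k l); last by rewrite e mulr0.
  rewrite mulr_sumr; apply: eq_bigr => k _.
  rewrite !polyrow_coef !mxE; ring.
move=> pv; apply/negP: v0; apply/negPn/eqP/rowP => k.
by rewrite -polyrow_coef pv coef0 mxE.
Qed.

Lemma size_deriv_le (q : {poly R}) : (size q^`() <= size q)%N.
Proof. by rewrite /deriv; apply: leq_trans (size_poly _ _) (leq_pred _). Qed.

Lemma int01_Xn l : int01 (fun t => (('X^l : {poly R}) ^+ 2).[t]) = (l + l).+1%:R^-1.
Proof.
rewrite -exprM (int01_poly (N := (l * 2).+1)) ?size_polyXn //.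
rewrite /pintN (bigD1 (Ordinal (ltnSn (l * 2)))) //= big1 ?addr0.
  by rewrite coefXn eqxx mul1r muln2 addnn.
by move=> k /eqP hk; rewrite coefXn; case: eqP => [e|]; [exfalso; apply: hk; apply: val_inj|rewrite mul0r].
Qed.


Lemma markov_exists n : exists K : R, 0 <= K /\ forall q : {poly R}, (size q <= n)%N ->
  int01 (fun t => (q^`() ^+ 2).[t]) <= K * int01 (fun t => (q ^+ 2).[t]).
Proof.
set Hi := invmx (Hm n).
set B := \sum_(k < n) \sum_(l < n) `|Hi l k|.
have B0 : 0 <= B by apply: sumr_ge0 => k _; apply: sumr_ge0 => l _; exact: normr_ge0.
exists ((n%:R * n%:R * B) ^+ 2); split; first exact: sqr_ge0.
move=> q hq.
set I := int01 (fun t => (q ^+ 2).[t]).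
have I0 : 0 <= I := int01_sq_ge0 q.
set s := Num.sqrt I.
have s0 : 0 <= s := sqrtr_ge0 _.
set c : 'rV[R]_n := \row_(k < n) q`_k.
have hm : forall l : 'I_n, `|(c *m Hm n) 0 l| <= s.
  move=> l.
  have e : (c *m Hm n) 0 l = int01 (fun t => (q * 'X^l).[t]).
    rewrite (int01_mul (n := n)) ?size_polyXn ?ltn_ord // mxE.
    apply: eq_bigr => k _; rewrite (bigD1 l) //= big1 ?addr0.
      by rewrite !mxE coefXn eqxx mulr1.
    move=> j hj; rewrite coefXn; case: eqP => [ee|]; last by rewrite mulr0 mul0r.
    by exfalso; move/eqP: hj; apply; apply: val_inj.
  rewrite e -sqrtr_sqr ler_wsqrtr //.
  have hC := int01_Xn l.
  have C0 : 0 < (l + l).+1%:R^-1 :> R by rewrite invr_gt0 ltr0Sn.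
  have C1 : (l + l).+1%:R^-1 <= 1 :> R by rewrite invf_le1 ?ltr0Sn // ler1n.
  apply: le_trans (int01_CS q _) _; first by rewrite hC.
  rewrite hC -/I; rewrite -[X in _ <= X]mulr1; apply: ler_wpM2l => //.
have hc : forall k : 'I_n, `|q`_k| <= s * B.
  move=> k.
  have -> : q`_k = c 0 k by rewrite mxE.
  rewrite -(mulmxK (Hm_unit n) c) -/Hi mxE.
  apply: le_trans (ler_norm_sum _ _ _) _.
  apply: (@le_trans _ _ (\sum_l s * `|Hi l k|)).
    apply: ler_sum => l _; rewrite normrM; apply: ler_wpM2r => //.
  rewrite -mulr_sumr; apply: ler_wpM2l => //.
  rewrite /B [X in _ <= X](bigD1 k) //= lerDl; apply: sumr_ge0 => j _; apply: sumr_ge0 => l _; exact: normr_ge0.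
have hcj : forall j, `|q`_j| <= s * B.
  move=> j; case: (ltnP j n) => hj; first exact: (hc (Ordinal hj)).
  by rewrite nth_default ?(leq_trans hq hj) // normr0 mulr_ge0.
have hd : forall t, 0 <= t <= 1 -> `|(q^`()).[t]| <= n%:R * n%:R * B * s.
  move=> t /andP[t0 t1].
  rewrite {1}(poly_expand (n := n) (leq_trans (size_deriv_le q) hq)) horner_sum.
  apply: le_trans (ler_norm_sum _ _ _) _.
  apply: (@le_trans _ _ (\sum_(i < n) n%:R * (s * B))); last first.
    rewrite sumr_const card_ord -mulr_natl; lra.
  apply: ler_sum => i _; rewrite hornerZ hornerXn normrM coef_deriv normrMn.
  have ht : `|t ^+ i| <= 1 by rewrite normrX ger0_norm // exprn_ile1.
  have hn : (i.+1%:R : R) <= n%:R by rewrite ler_nat ltn_ord.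
  have := hcj i.+1; have := normr_ge0 (t ^+ i); have := normr_ge0 (q`_i.+1).
  have := mulr_ge0 s0 B0.
  move: (`|t ^+ i|) (`|q`_i.+1|) ht hn => a b ha hn h1 h2 h3 h4.
  rewrite -[b *+ _]mulr_natl.
  apply: (@le_trans _ _ (i.+1%:R * b)); first by rewrite -[X in _ <= X]mulr1 ler_wpM2l // mulr_ge0.
  by apply: ler_pM.
have -> : (n%:R * n%:R * B) ^+ 2 * I = int01 (fun t => (((n%:R * n%:R * B) ^+ 2 * I)%:P).[t]).
  by rewrite -[LHS]int01_cst; congr int01; apply/funext => t; rewrite hornerC.
apply: int01_le => t ht; rewrite hornerC horner_exp.
have := hd t ht; rewrite -(sqr_sqrtr I0) -/s => h.
have -> : (q^`()).[t] ^+ 2 = `|(q^`()).[t]| ^+ 2 by rewrite real_normK ?num_real.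
rewrite -exprMn.
have := normr_ge0 ((q^`()).[t]); move: (`|(q^`()).[t]|) h => x h1 h2.
have hy : 0 <= n%:R * n%:R * B * s by rewrite !mulr_ge0.
nra.
Qed.

End B.

Section C.
Set Implicit Arguments. Unset Strict Implicit. Unset Printing Implicit Defensive.
Import numFieldNormedType.Exports.
Local Open Scope classical_set_scope.
Local Open Scope ring_scope.
Variable R : realType.

Lemma L2polyE (v : {poly R}) : L2poly v = Num.sqrt (int01 (fun t => (v ^+ 2).[t])).
Proof. by rewrite /L2poly; congr (Num.sqrt (int01 _)); apply/funext => t; rewrite horner_exp. Qed.

Lemma Cp1_prop p : 0 <= Cp1 R p /\ forall q : {poly R}, (size q <= p.+1)%N ->
  int01 (fun t => (q^`() ^+ 2).[t]) <= Cp1 R p ^+ 2 * int01 (fun t => (q ^+ 2).[t]).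
Proof.
have [K [K0 hK]] := @markov_exists R p.+1.
set S := [set C : R | 0 <= C /\
        forall v : {poly R}, (size v <= p.+1)%N -> L2poly v^`() <= C * L2poly v].
have hS : Cp1 R p = inf S by [].
have ne : S (Num.sqrt K).
  split; first exact: sqrtr_ge0.
  move=> v hv; rewrite !L2polyE -sqrtrM // ler_wsqrtr //; exact: hK.
have lb0 : lbound S 0 by move=> y [].
have C0 : 0 <= Cp1 R p by rewrite hS; apply: lb_le_inf => //; exists (Num.sqrt K).
split => // q hq.
have key : L2poly q^`() <= Cp1 R p * L2poly q.
  have L0 : 0 <= L2poly q by rewrite /L2poly sqrtr_ge0.
  case: (eqVneq (L2poly q) 0) => [e|ne0].
    have := ne.2 q hq; rewrite e !mulr0 => h.
    by apply: le_trans h _.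
  have Lp : 0 < L2poly q by rewrite lt0r ne0 L0.
  rewrite -ler_pdivrMr // hS; apply: lb_le_inf; first by exists (Num.sqrt K).
  by move=> y [y0 hy]; rewrite ler_pdivrMr //; exact: hy.
move: key; rewrite !L2polyE.
have a0 := int01_sq_ge0 q^`(); have b0 := int01_sq_ge0 q.
set a := int01 (fun t => (q^`() ^+ 2).[t]) in a0 *.
set b := int01 (fun t => (q ^+ 2).[t]) in b0 * => h.
have h' : 0 <= Num.sqrt a by apply: sqrtr_ge0.
have : Num.sqrt a ^+ 2 <= (Cp1 R p * Num.sqrt b) ^+ 2.
  have hc : 0 <= Cp1 R p * Num.sqrt b by apply: mulr_ge0 => //; exact: sqrtr_ge0.
  nra.
by rewrite exprMn !sqr_sqrtr.
Qed.
End C.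

Section D.
Set Implicit Arguments. Unset Strict Implicit. Unset Printing Implicit Defensive.
Import numFieldNormedType.Exports.
Local Open Scope classical_set_scope.
Local Open Scope ring_scope.
Variable R : realType.
Variable d : nat.

Lemma prod_if (K : 'I_d) (u : R) (a : 'I_d -> R) :
  \prod_(j < d) (if j == K then u else a j) = u * \prod_(j < d) (if j == K then 1 else a j).
Proof.
rewrite (bigD1 K) //= [in RHS](bigD1 K) //= !eqxx mul1r; congr (_ * _); apply: eq_bigr => j /negbTE -> //.
Qed.

Lemma int01_monos (T : Type) (s : seq T) (c : T -> R) (n : T -> nat) :
  int01 (fun t => \sum_(m <- s) c m * t ^+ n m) = \sum_(m <- s) c m / (n m).+1%:R.
Proof.
elim: s => [|x s IH].
  rewrite big_nil; have -> : (fun t : R => \sum_(m <- [::]) c m * t ^+ n m) = (fun _ => 0).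
    by apply/funext => t; rewrite big_nil.
  exact: int01_cst.
rewrite big_cons -IH.
rewrite (@int01_lin3 R 1 1 0 (c x *: 'X^(n x)) (\sum_(m <- s) c m *: 'X^(n m)) 0); last first.
  by move=> t; rewrite big_cons horner_sum hornerZ hornerXn horner0; under [in RHS]eq_bigr do rewrite hornerZ hornerXn; ring.
rewrite (int01_poly (N := (n x).+1)); last by apply: leq_trans (size_scale_leq _ _) _; rewrite size_polyXn.
rewrite pintN_XnZ // mul0r addr0 !mul1r; congr (_ + _).
have -> : (fun t => (\sum_(m <- s) c m *: 'X^(n m)).[t]) = (fun t => \sum_(m <- s) c m * t ^+ n m) => //.
by apply/funext => t; rewrite horner_sum; apply: eq_bigr => m _; rewrite hornerZ hornerXn.
Qed.

Lemma slice_int (T : Type) (K : 'I_d) (s : seq T) (c : T -> R) (a : T -> 'I_d -> R) (n : T -> nat) :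
  int01 (fun t => \sum_(m <- s) c m * \prod_(j < d) (if j == K then t ^+ n m else a m j)) =
  \sum_(m <- s) c m * \prod_(j < d) (if j == K then (n m).+1%:R^-1 else a m j).
Proof.
have -> : (fun t => \sum_(m <- s) c m * \prod_(j < d) (if j == K then t ^+ n m else a m j)) =
   (fun t => \sum_(m <- s) (c m * \prod_(j < d) (if j == K then 1 else a m j)) * t ^+ n m).
  apply/funext => t; apply: eq_bigr => m _; rewrite prod_if; ring.
rewrite int01_monos; apply: eq_bigr => m _; rewrite [in RHS]prod_if; ring.
Qed.

Definition mono (e : 'I_d -> nat) (x : 'rV[R]_d) : R := \prod_(j < d) x ord0 j ^+ e j.
Definition PF (s : seq (R * ('I_d -> nat))) (x : 'rV[R]_d) : R := \sum_(m <- s) m.1 * mono m.2 x.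
Definition iintF (k : nat) (s : seq (R * ('I_d -> nat))) (x : 'rV[R]_d) : R :=
  \sum_(m <- s) m.1 * \prod_(j < d) (if (j < k)%N then (m.2 j).+1%:R^-1 else x ord0 j ^+ m.2 j).

Lemma setcE (x : 'rV[R]_d) k t (j : 'I_d) : setc x k t ord0 j = if (j : nat) == k then t else x ord0 j.
Proof. by rewrite /setc mxE. Qed.

Lemma iint_PF k s x : iint k (PF s) x = iintF k s x.
Proof.
elim: k x => [|k IH] x /=.
  by rewrite /PF /iintF; apply: eq_bigr => m _; congr (_ * _); apply: eq_bigr => j _.
under eq_fun do rewrite IH.
case: (ltnP k d) => hk.
  set K := Ordinal hk.
  have -> : (fun t => iintF k s (setc x k t)) = (fun t => \sum_(m <- s) m.1 *
     \prod_(j < d) (if j == K then t ^+ m.2 K else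
        (if (j < k)%N then (m.2 j).+1%:R^-1 else x ord0 j ^+ m.2 j))).
    apply/funext => t; apply: eq_bigr => m _; congr (_ * _); apply: eq_bigr => j _.
    rewrite setcE; case: (eqVneq j K) => [->|hjK]; first by rewrite /= eqxx ltnn.
    have -> : ((j : nat) == k) = false by apply: contraNF hjK => /eqP e; apply/eqP/val_inj.
    by [].
  rewrite slice_int; apply: eq_bigr => m _; congr (_ * _); apply: eq_bigr => j _.
  case: (eqVneq j K) => [->|hjK]; first by rewrite /= ltnSn.
  have : ((j : nat) == k) = false by apply: contraNF hjK => /eqP e; apply/eqP/val_inj.
  by move=> e; rewrite [(j < k.+1)%N]ltnS [(j <= k)%N]leq_eqVlt e.
have -> : (fun t => iintF k s (setc x k t)) = (fun _ => iintF k s x).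
  apply/funext => t; apply: eq_bigr => m _; congr (_ * _); apply: eq_bigr => j _.
  by rewrite (leq_trans (ltn_ord j) hk).
rewrite int01_cst; apply: eq_bigr => m _; congr (_ * _); apply: eq_bigr => j _.
by rewrite (leq_trans (ltn_ord j) hk) (leq_trans (ltn_ord j) (leqW hk)).
Qed.


Lemma iint_ge0_from (f : 'rV[R]_d -> R) k0 :
  (forall y, 0 <= iint k0 f y) -> forall m y, 0 <= iint (k0 + m) f y.
Proof.
move=> h m; elim: m => [|m IH] y; first by rewrite addn0.
rewrite addnS /=; apply: int01_ge0 => t _; exact: IH.
Qed.

Lemma sum_lin (G : ('I_d -> nat) -> R) (a : R) (s1 s2 : seq (R * ('I_d -> nat))) :
  \sum_(m <- [seq (a * m.1, m.2) | m <- s1] ++ [seq (-1 * m.1, m.2) | m <- s2]) m.1 * G m.2 =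
  a * \sum_(m <- s1) m.1 * G m.2 - \sum_(m <- s2) m.1 * G m.2.
Proof.
rewrite big_cat !big_map /= mulr_sumr -sumrN; congr (_ + _); apply: eq_bigr => m _; ring.
Qed.

Definition sqr (s : seq (R * ('I_d -> nat))) : seq (R * ('I_d -> nat)) :=
  [seq (m.1.1 * m.2.1, fun j => (m.1.2 j + m.2.2 j)%N) | m <- [seq (a, b) | a <- s, b <- s]].

Lemma PF_sqr s x : PF (sqr s) x = PF s x ^+ 2.
Proof.
rewrite /PF /sqr big_map big_allpairs expr2 mulr_suml; apply: eq_bigr => a _.
rewrite mulr_sumr; apply: eq_bigr => b _ /=.
rewrite /mono.
have -> : \prod_(j < d) x ord0 j ^+ (a.2 j + b.2 j) =
  (\prod_(j < d) x ord0 j ^+ a.2 j) * \prod_(j < d) x ord0 j ^+ b.2 j.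
  by rewrite -big_split; apply: eq_bigr => j _; rewrite exprD.
ring.
Qed.

Variable i : 'I_d.

Lemma fact_setc (e : 'I_d -> nat) (z : 'rV[R]_d) (t : R) :
  \prod_(j < d) (setc z i t ord0 j ^+ e j) =
  \prod_(j < d) (if j == i then t ^+ e i else z ord0 j ^+ e j).
Proof.
apply: eq_bigr => j _; rewrite setcE val_eqE.
by case: (eqVneq j i) => [->|].
Qed.

Definition Qp (s : seq (R * ('I_d -> nat))) (z : 'rV[R]_d) : {poly R} :=
  \sum_(m <- s) (m.1 * \prod_(j < d) (if j == i then 1 else z ord0 j ^+ m.2 j)) *: 'X^(m.2 i).

Lemma PF_slice s z t : PF s (setc z i t) = (Qp s z).[t].
Proof.
rewrite /PF /Qp horner_sum; apply: eq_bigr => m _.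
by rewrite hornerZ hornerXn /mono fact_setc prod_if; ring.
Qed.

Lemma Qp_setc s z t : Qp s (setc z i t) = Qp s z.
Proof.
rewrite /Qp; apply: eq_bigr => m _; congr (_ *: _); congr (_ * _).
apply: eq_bigr => j _; rewrite setcE val_eqE; by case: (eqVneq j i).
Qed.

Lemma partial_Qp s z : partial i (PF s) z = ((Qp s z)^`()).[z ord0 i].
Proof.
rewrite /partial; have -> : (fun t => PF s (setc z i t)) = horner (Qp s z).
  by apply/funext => t; rewrite PF_slice.
by rewrite -derivE.
Qed.

Definition sdv (s : seq (R * ('I_d -> nat))) : seq (R * ('I_d -> nat)) :=
  [seq (m.1 * (m.2 i)%:R, fun j => if j == i then (m.2 i).-1 else m.2 j) | m <- s].

Lemma partial_rep s z : partial i (PF s) z = PF (sdv s) z.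
Proof.
rewrite partial_Qp /Qp raddf_sum horner_sum /PF /sdv big_map; apply: eq_bigr => m _ /=.
rewrite derivZ derivXn hornerZ hornerMn hornerXn /mono.
have -> : \prod_(j < d) z ord0 j ^+ (if j == i then (m.2 i).-1 else m.2 j) =
          \prod_(j < d) (if j == i then z ord0 i ^+ (m.2 i).-1 else z ord0 j ^+ m.2 j).
  by apply: eq_bigr => j _; case: (eqVneq j i) => [->|].
rewrite [in RHS]prod_if -mulr_natr; ring.
Qed.


Lemma size_Qp p s z : (forall m, m \in s -> (m.2 i <= p)%N) -> (size (Qp s z) <= p.+1)%N.
Proof.
move=> hs; rewrite /Qp big_seq; apply: (big_ind (fun q : {poly R} => (size q <= p.+1)%N)).
- by rewrite size_poly0.
- by move=> a b ha hb; apply: leq_trans (size_polyD _ _) _; rewrite geq_max ha hb.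
- move=> m hm; apply: leq_trans (size_scale_leq _ _) _; by rewrite size_polyXn ltnS hs.
Qed.

Lemma main_ineq p (sv : seq (R * ('I_d -> nat))) :
  (forall m, m \in sv -> (m.2 i <= p)%N) ->
  iint d (fun x => partial i (PF sv) x ^+ 2) 0 <= Cp1 R p ^+ 2 * iint d (fun x => PF sv x ^+ 2) 0.
Proof.
move=> hdeg.
have [C0 hC] := Cp1_prop R p.
set C2 := Cp1 R p ^+ 2.
set s1 := sqr sv; set s2 := sqr (sdv sv).
have e1 : (fun x => PF sv x ^+ 2) = PF s1 by apply/funext => x; rewrite PF_sqr.
have e2 : (fun x => partial i (PF sv) x ^+ 2) = PF s2.
  by apply/funext => x; rewrite PF_sqr partial_rep.
set sD := [seq (C2 * m.1, m.2) | m <- s1] ++ [seq (-1 * m.1, m.2) | m <- s2].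
have eD : forall k x, iintF k sD x = C2 * iintF k s1 x - iintF k s2 x.
  by move=> k x; rewrite /iintF /sD (sum_lin (fun e => \prod_(j < d) (if (j < k)%N then (e j).+1%:R^-1 else x ord0 j ^+ e j))).
have ePD : forall x, PF sD x = C2 * PF s1 x - PF s2 x.
  by move=> x; rewrite /PF /sD (sum_lin (fun e => mono e x)).
suff : 0 <= iint d (PF sD) 0.
  by rewrite e1 e2 !iint_PF eD subr_ge0.
set sE := [seq (m.1 / (m.2 i).+1%:R, fun j => if j == i then 0%N else m.2 j) | m <- sD].
have hEz : forall z, PF sE z = int01 (fun t => PF sD (setc z i t)).
  move=> z.
  have -> : (fun t => PF sD (setc z i t)) = (fun t => \sum_(m <- sD) m.1 *
      \prod_(j < d) (if j == i then t ^+ m.2 i else z ord0 j ^+ m.2 j)).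
    by apply/funext => t; rewrite /PF; apply: eq_bigr => m _; rewrite /mono fact_setc.
  rewrite /PF.
  rewrite (slice_int i sD (fun m => m.1) (fun m j => z ord0 j ^+ m.2 j) (fun m => m.2 i)).
  rewrite /sE big_map; apply: eq_bigr => m _ /=; rewrite [in RHS]prod_if /mono.
  have -> : \prod_(j < d) z ord0 j ^+ (if j == i then 0%N else m.2 j) =
            \prod_(j < d) (if j == i then 1 else z ord0 j ^+ m.2 j).
    by apply: eq_bigr => j _; case: (eqVneq j i).
  ring.
have Epos : forall z, 0 <= PF sE z.
  move=> z; rewrite hEz.
  set Q := Qp sv z.
  rewrite (@int01_lin3 R C2 (-1) 0 (Q ^+ 2) (Q^`() ^+ 2) 0); last first.
    move=> t; rewrite ePD -e1 -e2 /= partial_Qp Qp_setc setcE eqxx PF_slice -/Q !horner_exp horner0; ring.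
  have := hC Q (size_Qp z hdeg).
  have -> : (fun t => (0 : {poly R}).[t]) = (fun _ => 0) by apply/funext => t; rewrite horner0.
  rewrite int01_cst -/C2; lra.
have hE : forall y, 0 <= iint i.+1 (PF sD) y.
  move=> y; rewrite iint_PF.
  have -> : iintF i.+1 sD y = iintF i sE y.
    rewrite /iintF /sE big_map; apply: eq_bigr => m _ /=.
    have -> : \prod_(j < d) (if (j < i.+1)%N then (m.2 j).+1%:R^-1 else y ord0 j ^+ m.2 j) =
      \prod_(j < d) (if j == i then (m.2 i).+1%:R^-1 else
        (if (j < i)%N then (m.2 j).+1%:R^-1 else y ord0 j ^+ m.2 j)).
      apply: eq_bigr => j _; case: (eqVneq j i) => [->|hji]; first by rewrite ltnSn.
      have : ((j : nat) == i) = false by apply: contraNF hji => /eqP e; apply/eqP/val_inj.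
      by move=> e; rewrite [(j < i.+1)%N]ltnS [(j <= i)%N]leq_eqVlt e.
    have -> : \prod_(j < d) (if (j < i)%N then (if j == i then 0%N else m.2 j).+1%:R^-1
                 else y ord0 j ^+ (if j == i then 0%N else m.2 j)) =
      \prod_(j < d) (if j == i then 1 else
        (if (j < i)%N then (m.2 j).+1%:R^-1 else y ord0 j ^+ m.2 j)).
      by apply: eq_bigr => j _; case: (eqVneq j i) => [->|hji]; first by rewrite ltnn.
    rewrite prod_if; ring.
  rewrite -iint_PF; have := @iint_ge0_from (PF sE) 0 (fun y => Epos y) i y.
  by rewrite add0n.
have := @iint_ge0_from (PF sD) i.+1 hE (d - i.+1) 0.
by rewrite subnKC.
Qed.

End D.

Theorem lemmaA1 (R : realType) (d p : nat) : (1 <= d)%N ->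
  forall v : 'rV[R]_d -> R, is_poly_tdeg p v ->
  forall i : 'I_d, L2cube (partial i v) <= Cp1 R p * L2cube v.
Proof.
move=> _ v [c hv] i.
set sv := [seq (c a, fun j => nat_of_ord (a j)) |
  a <- enum [pred a : {ffun 'I_d -> 'I_p.+1} | (\sum_(i < d) (a i : nat) <= p)%N]].
have ev : v = PF sv.
  apply/funext => x; rewrite hv /PF /sv big_map big_enum /=.
  by apply: eq_bigr => a _.
have hdeg : forall m, m \in sv -> (m.2 i <= p)%N.
  by move=> m /mapP [a _ ->] /=; rewrite -ltnS ltn_ord.
have [C0 _] := Cp1_prop R p.
rewrite /L2cube ev.
rewrite -(ger0_norm C0) -sqrtr_sqr -sqrtrM ?sqr_ge0 // ler_wsqrtr //.
exact: main_ineq.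
Qed.
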